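(* Let $V=\mathbb{C}^6$ and let $\pi\subset\mathbb{P}(\wedge^2V)$ be a projective plane all of whose points have rank exactly four. Suppose that $\pi$ contains general lines, that the pivots of all general lines in $\pi$ pass through a common point of $\mathbb{P}(V)$, and that these pivots are not all equal. Then $\pi$ is $PGL_6$-equivalent to the plane $\pi_p$ spanned by $e_0\wedge e_3+e_1\wedge e_2$, $e_0\wedge e_4+e_2\wedge e_3$, $e_0\wedge e_5+e_1\wedge e_3$, where $e_0,\dots,e_5$ is a basis of $V$.
   Context: Elements of $\wedge^2\mathbb{C}^6$ are identified with skew-symmetric $6\times6$ matrices; rank means matrix rank. A projective line in $\mathbb{P}(\wedge^2V)$ all of whose points have rank four is called general if it is $PGL_6$-equivalent to the line spanned by $e_0\wedge e_2+e_1\wedge e_3$ and $e_0\wedge e_4+e_1\wedge e_5$. A general line $\ell$ is contained in $\mathbb{P}(W\wedge V)$ for a unique $2$-dimensional subspace $W\subset V$ (for the line above, $W=\langle e_0,e_1\rangle$); the projective line $\mathbb{P}(W)\subset\mathbb{P}(V)$ is called the pivot of $\ell$. Work over $\mathbb{C}$. *)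

(* Defs.v *)
(* V = C^6 with C = R[i] for an arbitrary R : realType
   (every realType is isomorphic to the real numbers, so R[i] is C). *)
From HB Require Import structures.
From mathcomp Require Import all_boot all_order all_algebra.
From mathcomp Require Import reals.
From mathcomp.real_closed Require Import complex.
Set Implicit Arguments. Unset Strict Implicit. Unset Printing Implicit Defensive.
Import Order.TTheory GRing.Theory Num.Theory.
Local Open Scope ring_scope.

Section Wedge.
Variable K : fieldType.

Definition evec (i : nat) : 'rV[K]_6 := delta_mx 0 (inord i).

(* v /\ w as a skew-symmetric 6x6 matrix : entry (i,j) = v_i w_j - w_i v_j *)
Definition wedge (v w : 'rV[K]_6) : 'M[K]_6 := v^T *m w - w^T *m v.

Definition ew (i j : nat) : 'M[K]_6 := wedge (evec i) (evec j).

Definition skew (X : 'M[K]_6) : bool := X^T == - X.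

(* a projective linear subspace of P(/\^2 V) is given by a linear
   subspace S of skew-symmetric matrices; all of its points have rank r *)
Definition skew_space (S : {vspace 'M[K]_6}) : Prop :=
  forall X, X \in S -> skew X.

Definition all_rank (r : nat) (S : {vspace 'M[K]_6}) : Prop :=
  forall X, X \in S -> X != 0 -> \rank X = r.

(* action of GL_6 on /\^2 V : (g . (v /\ w)) = (g v) /\ (g w); with row
   vectors the transformed matrix is g^T X g (g acting on row vectors
   on the right; all of GL_6 is covered). *)
Definition gact (g : 'M[K]_6) (X : 'M[K]_6) : 'M[K]_6 := g^T *m X *m g.

(* S and T are PGL_6-equivalent (scalars act trivially on projective
   subspaces, so GL_6 suffices) *)
Definition PGL_equiv (S T : {vspace 'M[K]_6}) : Prop :=
  exists2 g : 'M[K]_6, g \in unitmx & (linfun (gact g) @: S)%VS = T.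

Definition L0 : {vspace 'M[K]_6} :=
  (<[ew 0 2 + ew 1 3]> + <[ew 0 4 + ew 1 5]>)%VS.

Definition general_line (l : {vspace 'M[K]_6}) : Prop :=
  [/\ \dim l = 2%N, skew_space l, all_rank 4 l & PGL_equiv L0 l].

Definition wedgeWV (W : {vspace 'rV[K]_6}) : {vspace 'M[K]_6} :=
  (\sum_(w <- vbasis W) \sum_(j < 6) <[wedge w (evec j)]>)%VS.

Definition is_pivot (l : {vspace 'M[K]_6}) (W : {vspace 'rV[K]_6}) : Prop :=
  \dim W = 2%N /\ (l <= wedgeWV W)%VS.

Definition pi_p : {vspace 'M[K]_6} :=
  (<[ew 0 3 + ew 1 2]> + <[ew 0 4 + ew 2 3]> + <[ew 0 5 + ew 1 3]>)%VS.

End Wedge.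

(* Main.v *)
Require Import Defs.
From HB Require Import structures.
From mathcomp Require Import all_boot all_order all_algebra.
From mathcomp Require Import reals.
From mathcomp.real_closed Require Import complex.
From mathcomp Require Import ring zify.
Set Implicit Arguments. Unset Strict Implicit. Unset Printing Implicit Defensive.
Import Order.TTheory GRing.Theory Num.Theory.
Local Open Scope ring_scope.

Lemma gact_lin (K : fieldType) (g : 'M[K]_6) : linear (gact g).
Proof. by move=> a X Y; rewrite /gact mulmxDr mulmxDl -scalemxAr -scalemxAl. Qed.
HB.instance Definition _ (K : fieldType) (g : 'M[K]_6) :=
  GRing.isLinear.Build K 'M[K]_6 'M[K]_6 *:%R (gact g) (gact_lin g).

Lemma lfun_gact (K : fieldType) (g X : 'M[K]_6) : linfun (gact g) X = gact g X.
Proof. by rewrite lfunE. Qed.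

Section All.
Variable K : numFieldType.

Lemma wedgeE (v w : 'rV[K]_6) a b : wedge v w a b = v 0 a * w 0 b - w 0 a * v 0 b.
Proof. by rewrite /wedge !mxE !big_ord1 !mxE. Qed.

Lemma evecE i j : (i < 6)%N -> evec K i 0 j = if (j : nat) == i then 1 else 0.
Proof.
move=> hi; rewrite /evec mxE eqxx /= -(inj_eq val_inj) /= inordK //.
by case: eqP.
Qed.

Lemma evmulE k (M : 'M[K]_6) j : (evec K k *m M) 0 j = M (inord k) j.
Proof. by rewrite /evec -rowE mxE. Qed.

Definition zf (c1 c2 c3 c4 c5 d1 d2 d4 d5 : K) (i j : nat) : K :=
 match i, j with
 | 0,1 => c1 | 0,2 => c2 | 0,3 => c3 | 0,4 => c4 | 0,5 => c5
 | 1,0 => -c1 | 2,0 => -c2 | 3,0 => -c3 | 4,0 => -c4 | 5,0 => -c5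
 | 3,1 => d1 | 3,2 => d2 | 3,4 => d4 | 3,5 => d5
 | 1,3 => -d1 | 2,3 => -d2 | 4,3 => -d4 | 5,3 => -d5
 | _,_ => 0 end.

Definition LA := ew K 0 2 + ew K 1 3.
Definition LB := ew K 0 4 + ew K 1 5.

Ltac sp6 i := let H := fresh in case: i => [[|[|[|[|[|[|?]]]]]] H] //=.
Ltac veq := apply/rowP; let j := fresh "j" in move=> j; rewrite /LA /LB /ew !(wedgeE, evmulE, evecE, mxE) ?inordK //; sp6 j.

Lemma rank6 (M : 'M[K]_6) : (forall k, (k < 6)%N -> (evec K k <= M)%MS) -> \rank M = 6%N.
Proof.
move=> H; apply/eqP; rewrite eqn_leq rank_leq_row /= -{1}(mxrank1 K 6) mxrankS //.
apply/row_subP => i; rewrite rowE mulmx1.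
by have := H i (ltn_ord i); rewrite /evec inord_val.
Qed.

Lemma rowM_sub k (M : 'M[K]_6) : (evec K k *m M <= M)%MS.
Proof. exact: submxMl. Qed.

Ltac subc := repeat first [ apply: addmx_sub | apply: scalemx_sub | rewrite eqmx_opp | exact: rowM_sub | assumption ].

Lemma S1 (c1 c2 c3 c4 c5 d1 d2 d4 d5 : K) :
  let Z := \matrix_(i,j) zf c1 c2 c3 c4 c5 d1 d2 d4 d5 i j in
  (forall x y z : K, x *: LA + y *: LB + z *: Z != 0 -> \rank (x *: LA + y *: LB + z *: Z)%R = 4%N) ->
  d2 = 0 /\ d4 = 0.
Proof.
move=> Z hr.
have cert : forall x y, y != 0 -> (x + c2) * d4 - (y + c4) * d2 != 0 -> False.
  move=> x y hy hD; set M := x *: LA + y *: LB + 1 *: Z.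
  set u2 := x + c2; set u4 := y + c4; set D := u2 * d4 - u4 * d2.
  have e0M : (evec K 0 <= M)%MS.
    have -> : evec K 0 = (- D^-1) *: (d4 *: (evec K 2 *m M) - d2 *: (evec K 4 *m M)).
      by veq; rewrite /D /u2 /u4; field.
    by rewrite scalemx_sub // addmx_sub // ?eqmx_opp scalemx_sub // rowM_sub.
  have e3M : (evec K 3 <= M)%MS.
    have -> : evec K 3 = D^-1 *: (u4 *: (evec K 2 *m M) - u2 *: (evec K 4 *m M)).
      by veq; rewrite /D /u2 /u4; field.
    by subc.
  have e1M : (evec K 1 <= M)%MS.
    have -> : evec K 1 = (- y^-1) *: (evec K 5 *m M + c5 *: evec K 0 + d5 *: evec K 3).
      by veq; field.
    by subc.
  have e5M : (evec K 5 <= M)%MS.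
    have -> : evec K 5 = y^-1 *: (evec K 1 *m M + c1 *: evec K 0 - (x - d1) *: evec K 3).
      by veq; field.
    by subc.
  have e2M : (evec K 2 <= M)%MS.
    have -> : evec K 2 = D^-1 *: (d4 *: (evec K 0 *m M - c1 *: evec K 1 - c3 *: evec K 3 - c5 *: evec K 5)
        - u4 *: (evec K 3 *m M + c3 *: evec K 0 + (x - d1) *: evec K 1 - d5 *: evec K 5)).
      by veq; rewrite /D /u2 /u4; field.
    by subc.
  have e4M : (evec K 4 <= M)%MS.
    have -> : evec K 4 = D^-1 *: (u2 *: (evec K 3 *m M + c3 *: evec K 0 + (x - d1) *: evec K 1 - d5 *: evec K 5)
        - d2 *: (evec K 0 *m M - c1 *: evec K 1 - c3 *: evec K 3 - c5 *: evec K 5)).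
      by veq; rewrite /D /u2 /u4; field.
    by subc.
  have r6 : \rank M = 6%N.
    by apply: rank6 => -[|[|[|[|[|[|k]]]]]].
  have M0 : M != 0 by apply/eqP => M0; move: r6; rewrite M0 mxrank0.
  by have := hr x y 1 M0; rewrite -/M r6.
have h2 : (2%:R : K) != 0 by rewrite pnatr_eq0.
have [d40|d4n0] := eqVneq d4 0; last first.
  exfalso; apply: (cert (((1 + c4) * d2 + d4) / d4 - c2) 1); first exact: oner_neq0.
  suff -> : (((1 + c4) * d2 + d4) / d4 - c2 + c2) * d4 - (1 + c4) * d2 = d4 by [].
  by field.
split=> //; apply/eqP; apply: contraT => d2n0; subst d4; exfalso.
have [c4e|c4n] := eqVneq (1 + c4) 0.
  apply: (cert 0 2%:R h2); rewrite mulr0 sub0r oppr_eq0 mulf_neq0 //.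
  have -> : (2%:R + c4 : K) = 1 + (1 + c4) by rewrite addrA -(natrD K 1 1).
  by rewrite c4e addr0 oner_neq0.
apply: (cert 0 1); first exact: oner_neq0.
by rewrite mulr0 sub0r oppr_eq0 mulf_neq0 // addrC.
Qed.

Lemma wedge_sub2 (v w : 'rV[K]_6) m (S : 'M[K]_(m,6)) :
  (v <= S)%MS -> (w <= S)%MS -> (wedge v w <= S)%MS.
Proof.
move=> vS wS; rewrite /wedge addmx_sub // ?eqmx_opp.
  exact: submx_trans (submxMl _ _) wS.
exact: submx_trans (submxMl _ _) vS.
Qed.

Lemma nth_sub (s : seq 'rV[K]_6) k : (k < size s)%N ->
  (nth 0 s k <= \matrix_(i < size s) nth 0 s i)%MS.
Proof. by move=> hk; have := row_sub (Ordinal hk) (\matrix_(i < size s) nth 0 s i); rewrite rowK. Qed.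

Definition Zmx (c1 c2 c3 c4 c5 d1 d2 d4 d5 : K) : 'M[K]_6 :=
  \matrix_(i,j) zf c1 c2 c3 c4 c5 d1 d2 d4 d5 i j.

Lemma S2 (c1 c2 c3 c4 c5 d1 : K) :
  \rank (col_mx LA (Zmx c1 c2 c3 c4 c5 d1 0 0 0)) = 6%N -> False.
Proof.
move=> hr.
set c := c1 *: evec K 1 + c2 *: evec K 2 + c3 *: evec K 3 + c4 *: evec K 4 + c5 *: evec K 5.
set S := \matrix_(i < size [:: evec K 0; evec K 1; evec K 2; evec K 3; c])
            nth 0 [:: evec K 0; evec K 1; evec K 2; evec K 3; c] i.
have sub : (col_mx LA (Zmx c1 c2 c3 c4 c5 d1 0 0 0) <= S)%MS.
  have -> : Zmx c1 c2 c3 c4 c5 d1 0 0 0 = wedge (evec K 0) c + wedge (evec K 3) (d1 *: evec K 1).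
    apply/matrixP => a b; rewrite /Zmx /c !(wedgeE, evecE, mxE) //.
    by sp6 a; sp6 b; ring.
  have s0 : (evec K 0 <= S)%MS by exact: (nth_sub (s := [:: evec K 0; evec K 1; evec K 2; evec K 3; c]) (k := 0%N)).
  have s1 : (evec K 1 <= S)%MS by exact: (nth_sub (s := [:: evec K 0; evec K 1; evec K 2; evec K 3; c]) (k := 1%N)).
  have s2 : (evec K 2 <= S)%MS by exact: (nth_sub (s := [:: evec K 0; evec K 1; evec K 2; evec K 3; c]) (k := 2%N)).
  have s3 : (evec K 3 <= S)%MS by exact: (nth_sub (s := [:: evec K 0; evec K 1; evec K 2; evec K 3; c]) (k := 3%N)).
  have s4 : (c <= S)%MS by exact: (nth_sub (s := [:: evec K 0; evec K 1; evec K 2; evec K 3; c]) (k := 4%N)).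
  rewrite col_mx_sub; apply/andP; split; rewrite ?/LA /ew;
    by repeat first [ assumption | apply: wedge_sub2 | apply: addmx_sub | apply: scalemx_sub ].
have := mxrankS sub; rewrite hr.
by move/leq_trans/(_ (rank_leq_row S)).
Qed.

Ltac meq := apply/matrixP; let a := fresh "a" in let b := fresh "b" in move=> a b;
   rewrite /Zmx /LA /LB /ew !(wedgeE, evecE, mxE) //; sp6 a; sp6 b.

Lemma S3 (c1 c2 c3 c4 c5 d1 d5 : K) : d5 != 0 ->
  let Z := Zmx c1 c2 c3 c4 c5 d1 0 0 d5 in
  (forall x y z : K, x *: LA + y *: LB + z *: Z != 0 -> \rank (x *: LA + y *: LB + z *: Z)%R = 4%N) ->
  c1 * d5 + c3 * c4 - c5 * (d1 + c2) != 0.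
Proof.
move=> d5n0 Z hr; apply: contraT; rewrite negbK => /eqP D0.
have ec1 : c1 = (c5 * (d1 + c2) - c3 * c4) / d5.
  by apply: (mulIf d5n0); rewrite mulfVK // -[c1 * d5]subr0 -D0; ring.
set f1 := (-c4) *: evec K 1 + d5 *: evec K 3.
set f2 := ((d1 + c2) / d5) *: evec K 1 + evec K 5.
set w := c1 *: evec K 1 + c3 *: evec K 3 + c5 *: evec K 5.
set Z0 := (-c2) *: LA + (-c4) *: LB + 1 *: Z.
have eZ0 : Z0 = wedge (evec K 0) w + wedge f1 f2.
  by rewrite /Z0 /Z /w /f1 /f2; meq; field.
have eqw : w = (c3 / d5) *: f1 + c5 *: f2.
  by rewrite /w /f1 /f2 ec1; veq; field.
set S := \matrix_(i < size [:: evec K 0; f1; f2]) nth 0 [:: evec K 0; f1; f2] i.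
have s0 : (evec K 0 <= S)%MS by exact: (nth_sub (s := [:: evec K 0; f1; f2]) (k := 0%N)).
have s1 : (f1 <= S)%MS by exact: (nth_sub (s := [:: evec K 0; f1; f2]) (k := 1%N)).
have s2 : (f2 <= S)%MS by exact: (nth_sub (s := [:: evec K 0; f1; f2]) (k := 2%N)).
have sw : (w <= S)%MS by rewrite eqw addmx_sub // scalemx_sub.
have sub : (Z0 <= S)%MS by rewrite eZ0 addmx_sub // wedge_sub2.
have Z0n0 : Z0 != 0.
  apply/eqP => H; have := congr1 (fun M : 'M[K]_6 => M (inord 3) (inord 5)) H.
  rewrite /Z0 /Z /LA /LB /ew !(wedgeE, evecE, mxE) ?inordK //=.
  by move=> HH; move: d5n0; rewrite -HH; apply/negP; rewrite negbK; apply/eqP; ring.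
have := hr (-c2) (-c4) 1 Z0n0; rewrite -/Z0 => r4.
by have := mxrankS sub; rewrite r4 => /leq_trans/(_ (rank_leq_row S)).
Qed.

Lemma gact_wedge (g : 'M[K]_6) (v w : 'rV[K]_6) : gact g (wedge v w) = wedge (v *m g) (w *m g).
Proof. by rewrite /gact /wedge mulmxBr mulmxBl !trmx_mul !mulmxA. Qed.

Lemma gactD (g X Y : 'M[K]_6) : gact g (X + Y) = gact g X + gact g Y.
Proof. by rewrite /gact mulmxDr mulmxDl. Qed.

Lemma gact_ew2 (g : 'M[K]_6) i j k l : gact g (ew K i j + ew K k l) =
  wedge (evec K i *m g) (evec K j *m g) + wedge (evec K k *m g) (evec K l *m g).
Proof. by rewrite /gact mulmxDr mulmxDl; congr (_ + _); exact: gact_wedge. Qed.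

Lemma rows_mul (s : seq 'rV[K]_6) k : (k < 6)%N -> evec K k *m (\matrix_(i < 6) nth 0 s i) = nth 0 s k.
Proof. by move=> hk; rewrite /evec -rowE rowK inordK. Qed.

Lemma rows_sub (s : seq 'rV[K]_6) k : (k < 6)%N -> (nth 0 s k <= \matrix_(i < 6) nth 0 s i)%MS.
Proof. by move=> hk; rewrite -rows_mul // submxMl. Qed.

Lemma S4 (c1 c2 c3 c4 c5 d1 d5 : K) : d5 != 0 -> c1 * d5 + c3 * c4 - c5 * (d1 + c2) != 0 ->
  let Z := Zmx c1 c2 c3 c4 c5 d1 0 0 d5 in
  exists2 h : 'M[K]_6, h \in unitmx &
  [/\ gact h (ew K 0 3 + ew K 1 2) = (-c2) *: LA + (-c4) *: LB + 1 *: Z,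
      gact h (ew K 0 4 + ew K 2 3) = (c2 * c3 / d5) *: LA + ((c3 * c4 - (c1 * d5 + c3 * c4 - c5 * (d1 + c2))) / d5) *: LB + (- c3 / d5) *: Z &
      gact h (ew K 0 5 + ew K 1 3) = (- (c1 * d5 + c3 * c4 - c5 * (d1 + c2)) - c5 * c2) *: LA + (- c5 * c4) *: LB + c5 *: Z].
Proof.
move=> d5n0 Dn0 Z.
set D := c1 * d5 + c3 * c4 - c5 * (d1 + c2).
set f0 := evec K 0.
set f1 := (-c4) *: evec K 1 + d5 *: evec K 3.
set f2 := ((d1 + c2) / d5) *: evec K 1 + evec K 5.
set f3 := c1 *: evec K 1 + c3 *: evec K 3 + c5 *: evec K 5.
set f4 := (- (D / d5)) *: evec K 4 + (- (c3 / d5)) *: f3.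
set f5 := (- D) *: evec K 2 + c5 *: f3.
set s := [:: f0; f1; f2; f3; f4; f5].
exists (\matrix_(i < 6) nth 0 s i).
  rewrite -row_full_unit /row_full; apply/eqP; apply: rank6.
  have h0 : (f0 <= \matrix_(i < 6) nth 0 s i)%MS by exact: (rows_sub s (k := 0%N)).
  have h1 : (f1 <= \matrix_(i < 6) nth 0 s i)%MS by exact: (rows_sub s (k := 1%N)).
  have h2 : (f2 <= \matrix_(i < 6) nth 0 s i)%MS by exact: (rows_sub s (k := 2%N)).
  have h3 : (f3 <= \matrix_(i < 6) nth 0 s i)%MS by exact: (rows_sub s (k := 3%N)).
  have h4 : (f4 <= \matrix_(i < 6) nth 0 s i)%MS by exact: (rows_sub s (k := 4%N)).
  have h5 : (f5 <= \matrix_(i < 6) nth 0 s i)%MS by exact: (rows_sub s (k := 5%N)).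
  move=> [|[|[|[|[|[|k]]]]]] // _.
  - have -> : evec K 1 = D^-1 *: ((- c3) *: f1 + (- (d5 * c5)) *: f2 + d5 *: f3).
      by rewrite /f1 /f2 /f3 /D; veq; field; rewrite ?d5n0 ?Dn0.
    by repeat first [ assumption | apply: addmx_sub | apply: scalemx_sub ].
  - have -> : evec K 2 = (- D^-1) *: (f5 - c5 *: f3).
      by rewrite /f5 /f3 /D; veq; field; rewrite ?d5n0 ?Dn0.
    by repeat first [ assumption | apply: addmx_sub | apply: scalemx_sub | rewrite eqmx_opp ].
  - have -> : evec K 3 = D^-1 *: ((c1 - (d1 + c2) / d5 * c5) *: f1 + (- (c4 * c5)) *: f2 + c4 *: f3).
      by rewrite /f1 /f2 /f3 /D; veq; field; rewrite ?d5n0 ?Dn0.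
    by repeat first [ assumption | apply: addmx_sub | apply: scalemx_sub ].
  - have -> : evec K 4 = (- (d5 / D)) *: (f4 + (c3 / d5) *: f3).
      by rewrite /f4 /f3 /D; veq; field; rewrite ?d5n0 ?Dn0.
    by repeat first [ assumption | apply: addmx_sub | apply: scalemx_sub ].
  - have -> : evec K 5 = D^-1 *: (((d1 + c2) / d5 * c3) *: f1 + (c4 * c3 + d5 * c1) *: f2 + (- (d5 * ((d1 + c2) / d5))) *: f3).
      by rewrite /f1 /f2 /f3 /D; veq; field; rewrite ?d5n0 ?Dn0.
    by repeat first [ assumption | apply: addmx_sub | apply: scalemx_sub ].
rewrite !gact_ew2 !rows_mul //=.
split.
- by rewrite /Z /f0 /f1 /f2 /f3; meq; field; rewrite ?d5n0 ?Dn0.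
- by rewrite /Z /f0 /f2 /f3 /f4 /D; meq; field; rewrite ?d5n0 ?Dn0.
- by rewrite /Z /f0 /f1 /f3 /f5 /D; meq; field; rewrite ?d5n0 ?Dn0.
Qed.


Definition perpWV (W : {vspace 'rV[K]_6}) (M : 'M[K]_6) :=
  forall y : 'rV[K]_6, (forall w, w \in W -> y *m w^T = 0) -> y *m M \in W.

Lemma mx11_mul (a : 'M[K]_1) (w : 'rV[K]_6) : a *m w = a 0 0 *: w.
Proof. by rewrite {1}[a]mx11_scalar mul_scalar_mx. Qed.

Lemma wedgeWV_perp W M : M \in wedgeWV W -> perpWV W M.
Proof.
rewrite /wedgeWV big_seq; move: M.
apply: (big_ind (fun U : {vspace 'M[K]_6} => forall M, M \in U -> perpWV W M)).
- by move=> M; rewrite memv0 => /eqP -> y _; rewrite mulmx0 mem0v.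
- move=> U V hU hV M /memv_addP [u hu [v hv ->]] y hy.
  by rewrite mulmxDr memvD //; [exact: hU | exact: hV].
move=> w wB.
apply: (big_ind (fun U : {vspace 'M[K]_6} => forall M, M \in U -> perpWV W M)).
- by move=> M; rewrite memv0 => /eqP -> y _; rewrite mulmx0 mem0v.
- move=> U V hU hV M /memv_addP [u hu [v hv ->]] y hy.
  by rewrite mulmxDr memvD //; [exact: hU | exact: hV].
move=> j _ M /vlineP [k ->] y hy.
rewrite -scalemxAr memvZ // /wedge mulmxBr !mulmxA (hy _ (vbasis_mem wB)) mul0mx sub0r.
by rewrite mx11_mul memvN memvZ // vbasis_mem.
Qed.

Lemma mem2P (p q x : 'rV[K]_6) :
  reflect (exists a b, x = a *: p + b *: q) (x \in <[p]> + <[q]>)%VS.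
Proof.
apply: (iffP memv_addP).
  by move=> [u /vlineP [a ->] [v /vlineP [b ->] ->]]; exists a, b.
move=> [a [b ->]]; exists (a *: p); first by rewrite memvZ // memv_line.
by exists (b *: q); rewrite // memvZ // memv_line.
Qed.

Lemma comb_sub2 (p q x : 'rV[K]_6) : x \in (<[p]> + <[q]>)%VS -> (x <= col_mx p q)%MS.
Proof.
move=> /mem2P [a [b ->]]; rewrite -addsmxE addmx_sub // scalemx_sub //.
  exact: addsmxSl.
exact: addsmxSr.
Qed.

Lemma pivot_sub (p q : 'rV[K]_6) (W : {vspace 'rV[K]_6}) M :
  W = (<[p]> + <[q]>)%VS -> perpWV W M -> \rank M = 4%N ->
  (p <= M)%MS /\ (q <= M)%MS.
Proof.
move=> hW hM rM.
set Wm := col_mx p q.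
set Kr := kermx Wm^T.
have KM : (Kr *m M <= Wm)%MS.
  apply/row_subP => i; rewrite row_mul; apply: comb_sub2; rewrite -hW; apply: hM.
  have : (row i Kr <= Kr)%MS by exact: row_sub.
  move/sub_kermxP; rewrite tr_col_mx mul_mx_row => /eqP; rewrite -row_mx0 => /eqP.
  case/eq_row_mx => hp hq w; rewrite hW => /mem2P [a [b ->]].
  by rewrite linearD /= !linearZ /= mulmxDr -!scalemxAr hp hq !scaler0 addr0.
have r1 := mxrank_mul_min Kr M.
have r2 : \rank Kr = (6 - \rank Wm)%N by rewrite mxrank_ker mxrank_tr.
have r3 := mxrankS KM.
have r4 : (\rank Wm <= 2)%N by exact: rank_leq_row.
have eq : \rank (Kr *m M) = \rank Wm by apply/eqP; rewrite eqn_leq r3 /=; lia.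
have WKM : (Wm <= Kr *m M)%MS by rewrite -(mxrank_leqif_sup KM) eq.
have WM : (Wm <= M)%MS := submx_trans WKM (submxMl _ _).
split; apply: submx_trans WM; rewrite -addsmxE; [exact: addsmxSl | exact: addsmxSr].
Qed.


Lemma LA_ew : LA = ew K 0 2 + ew K 1 3. Proof. by []. Qed.
Lemma LB_ew : LB = ew K 0 4 + ew K 1 5. Proof. by []. Qed.

Lemma unit_rows (g : 'M[K]_6) (s : seq 'rV[K]_6) : g \in unitmx ->
  (forall k, (k < 6)%N -> (evec K k *m g <= \matrix_(i < 6) nth 0 s i)%MS) ->
  \matrix_(i < 6) nth 0 s i \in unitmx.
Proof.
rewrite -!row_full_unit /row_full => /eqP gf H.
have sub : (g <= \matrix_(i < 6) nth 0 s i)%MS.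
  apply/row_subP => i; rewrite rowE.
  by have := H i (ltn_ord i); rewrite /evec inord_val.
by rewrite eqn_leq rank_leq_row /= -{1}gf mxrankS.
Qed.

Lemma gact_mul (h g X : 'M[K]_6) : gact (h *m g) X = gact g (gact h X).
Proof. by rewrite /gact trmx_mul !mulmxA. Qed.

Lemma gactK (g X : 'M[K]_6) : g \in unitmx -> gact (invmx g) (gact g X) = X.
Proof.
move=> gu; rewrite -gact_mul mulmxV // /gact trmx1 mul1mx mulmx1 //.
Qed.

Lemma gactVK (g X : 'M[K]_6) : g \in unitmx -> gact g (gact (invmx g) X) = X.
Proof.
move=> gu; rewrite -gact_mul mulVmx // /gact trmx1 mul1mx mulmx1 //.
Qed.

Lemma rank_gact (g X : 'M[K]_6) : g \in unitmx -> \rank (gact g X) = \rank X.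
Proof.
move=> gu; rewrite /gact mxrankMfree; last by rewrite /row_free mxrank_unit.
rewrite -mxrank_tr trmx_mul trmxK mxrankMfree ?mxrank_tr //.
by rewrite /row_free mxrank_unit.
Qed.

Lemma gact_sub (g X : 'M[K]_6) (v : 'rV[K]_6) : g \in unitmx ->
  (v <= gact g X)%MS -> (v *m invmx g <= X)%MS.
Proof.
move=> gu /submxP [y ->]; rewrite /gact -!mulmxA mulmxV // mulmx1 mulmxA.
exact: submxMl.
Qed.

Lemma rowdec (u : 'rV[K]_6) : u = u 0 (inord 0) *: evec K 0 + u 0 (inord 1) *: evec K 1
  + u 0 (inord 2) *: evec K 2 + u 0 (inord 3) *: evec K 3 + u 0 (inord 4) *: evec K 4
  + u 0 (inord 5) *: evec K 5.
Proof.
apply/rowP => j; rewrite !(evecE, mxE) // -{1}(inord_val j); sp6 j; ring.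
Qed.

Lemma rowdec_mul (u : 'rV[K]_6) (g : 'M[K]_6) : u *m g = u 0 (inord 0) *: (evec K 0 *m g) + u 0 (inord 1) *: (evec K 1 *m g)
  + u 0 (inord 2) *: (evec K 2 *m g) + u 0 (inord 3) *: (evec K 3 *m g) + u 0 (inord 4) *: (evec K 4 *m g)
  + u 0 (inord 5) *: (evec K 5 *m g).
Proof. by rewrite {1}(rowdec u) !mulmxDl -!scalemxAl. Qed.

Lemma LA_col (u : 'rV[K]_6) : (u <= LA)%MS -> u 0 (inord 4) = 0 /\ u 0 (inord 5) = 0.
Proof.
move=> /submxP [y ->]; rewrite !mxE; split; apply: big1 => k _;
  by rewrite /LA /ew !(wedgeE, evecE, mxE) ?inordK //= !(mulr0, mul0r, subr0, addr0).
Qed.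

Lemma LB_col (u : 'rV[K]_6) : (u <= LB)%MS -> u 0 (inord 2) = 0 /\ u 0 (inord 3) = 0.
Proof.
move=> /submxP [y ->]; rewrite !mxE; split; apply: big1 => k _;
  by rewrite /LB /ew !(wedgeE, evecE, mxE) ?inordK //= !(mulr0, mul0r, subr0, addr0).
Qed.

Ltac vgen := apply/rowP; let j := fresh "j" in move=> j; rewrite !mxE.
Ltac mgen := apply/matrixP; let a := fresh "a" in let b := fresh "b" in move=> a b; rewrite !(wedgeE, mxE).
Ltac subr := repeat first [ assumption | apply: addmx_sub | apply: scalemx_sub | rewrite eqmx_opp ].

Lemma gactLA (g : 'M[K]_6) : gact g LA = wedge (evec K 0 *m g) (evec K 2 *m g) + wedge (evec K 1 *m g) (evec K 3 *m g).
Proof. exact: gact_ew2. Qed.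
Lemma gactLB (g : 'M[K]_6) : gact g LB = wedge (evec K 0 *m g) (evec K 4 *m g) + wedge (evec K 1 *m g) (evec K 5 *m g).
Proof. exact: gact_ew2. Qed.

Lemma gactZD (g X Y : 'M[K]_6) a b : gact g (a *: X + b *: Y) = a *: gact g X + b *: gact g Y.
Proof. by rewrite /gact mulmxDr mulmxDl -!scalemxAr -!scalemxAl. Qed.

Lemma inv2 (s t u w : K) (a b : 'rV[K]_6) : s * w - t * u != 0 ->
  a = (s * w - t * u)^-1 *: (w *: (s *: a + t *: b) - t *: (u *: a + w *: b)) /\
  b = (s * w - t * u)^-1 *: ((- u) *: (s *: a + t *: b) + s *: (u *: a + w *: b)).
Proof. by move=> d; split; vgen; field. Qed.

Lemma fr1_id (r0 r1 r2 r3 r4 r5 : 'rV[K]_6) s t :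
  wedge r0 (s *: r2 + t *: r4) + wedge r1 (s *: r3 + t *: r5) =
  s *: (wedge r0 r2 + wedge r1 r3) + t *: (wedge r0 r4 + wedge r1 r5).
Proof. by mgen; ring. Qed.

Lemma frame1 (g : 'M[K]_6) s t : g \in unitmx -> (s != 0) || (t != 0) ->
  exists2 g' : 'M[K]_6, g' \in unitmx &
   gact g' LA = gact g (s *: LA + t *: LB) /\ exists u w, gact g' LB = gact g (u *: LA + w *: LB).
Proof.
move=> gu st.
pose u : K := if s != 0 then 0 else 1.
pose w : K := if s != 0 then 1 else 0.
have d : s * w - t * u != 0.
  by rewrite /u /w; case: (s =P 0) st => [->|/eqP sn0] /=; rewrite ?mulr0 ?mulr1 ?subr0 ?sub0r ?oppr_eq0.
set s' := [:: evec K 0 *m g; evec K 1 *m g; s *: (evec K 2 *m g) + t *: (evec K 4 *m g);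
   s *: (evec K 3 *m g) + t *: (evec K 5 *m g); u *: (evec K 2 *m g) + w *: (evec K 4 *m g);
   u *: (evec K 3 *m g) + w *: (evec K 5 *m g)].
exists (\matrix_(i < 6) nth 0 s' i).
  apply: (unit_rows gu) => k.
  have h0 := rows_sub s' (k := 0%N) isT; have h1 := rows_sub s' (k := 1%N) isT.
  have h2 := rows_sub s' (k := 2%N) isT; have h3 := rows_sub s' (k := 3%N) isT.
  have h4 := rows_sub s' (k := 4%N) isT; have h5 := rows_sub s' (k := 5%N) isT.
  rewrite /= in h0 h1 h2 h3 h4 h5.
  case: k => [|[|[|[|[|[|k]]]]]] // _.
  - by rewrite {1}(inv2 (evec K 2 *m g) (evec K 4 *m g) d).1; subr.
  - by rewrite {1}(inv2 (evec K 3 *m g) (evec K 5 *m g) d).1; subr.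
  - by rewrite {1}(inv2 (evec K 2 *m g) (evec K 4 *m g) d).2; subr.
  - by rewrite {1}(inv2 (evec K 3 *m g) (evec K 5 *m g) d).2; subr.
rewrite gactLA gactLB !gactZD !gactLA !gactLB !rows_mul //=.
by split; last (exists u, w; rewrite gactZD gactLA gactLB); apply: fr1_id.
Qed.


Lemma fr2_id (x y z w : 'rV[K]_6) a0 a1 k0 k1 : a0 * k1 - a1 * k0 != 0 ->
  wedge (a0 *: x + a1 *: y) ((a0 * k1 - a1 * k0)^-1 *: (k1 *: z - k0 *: w)) +
  wedge (k0 *: x + k1 *: y) ((a0 * k1 - a1 * k0)^-1 *: ((- a1) *: z + a0 *: w)) =
  wedge x z + wedge y w.
Proof. by move=> d; mgen; field. Qed.

Lemma fr2_inv (x y z w : 'rV[K]_6) a0 a1 k0 k1 : a0 * k1 - a1 * k0 != 0 ->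
  [/\ x = (a0 * k1 - a1 * k0)^-1 *: (k1 *: (a0 *: x + a1 *: y) - a1 *: (k0 *: x + k1 *: y)),
      y = (a0 * k1 - a1 * k0)^-1 *: ((- k0) *: (a0 *: x + a1 *: y) + a0 *: (k0 *: x + k1 *: y)),
      z = a0 *: ((a0 * k1 - a1 * k0)^-1 *: (k1 *: z - k0 *: w)) + k0 *: ((a0 * k1 - a1 * k0)^-1 *: ((- a1) *: z + a0 *: w)) &
      w = a1 *: ((a0 * k1 - a1 * k0)^-1 *: (k1 *: z - k0 *: w)) + k1 *: ((a0 * k1 - a1 * k0)^-1 *: ((- a1) *: z + a0 *: w))].
Proof. by move=> d; split; vgen; field. Qed.

Lemma frame2 (g : 'M[K]_6) (a0 a1 : K) : g \in unitmx -> (a0 != 0) || (a1 != 0) ->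
  exists2 g' : 'M[K]_6, g' \in unitmx &
   [/\ evec K 0 *m g' = a0 *: (evec K 0 *m g) + a1 *: (evec K 1 *m g),
       gact g' LA = gact g LA & gact g' LB = gact g LB].
Proof.
move=> gu st.
pose k0 : K := if a0 != 0 then 0 else 1.
pose k1 : K := if a0 != 0 then 1 else 0.
have d : a0 * k1 - a1 * k0 != 0.
  by rewrite /k0 /k1; case: (a0 =P 0) st => [->|/eqP sn0] /=; rewrite ?mulr0 ?mulr1 ?subr0 ?sub0r ?oppr_eq0 ?mul0r.
set dd := a0 * k1 - a1 * k0.
set s' := [:: a0 *: (evec K 0 *m g) + a1 *: (evec K 1 *m g); k0 *: (evec K 0 *m g) + k1 *: (evec K 1 *m g);
   dd^-1 *: (k1 *: (evec K 2 *m g) - k0 *: (evec K 3 *m g)); dd^-1 *: ((- a1) *: (evec K 2 *m g) + a0 *: (evec K 3 *m g));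
   dd^-1 *: (k1 *: (evec K 4 *m g) - k0 *: (evec K 5 *m g)); dd^-1 *: ((- a1) *: (evec K 4 *m g) + a0 *: (evec K 5 *m g))].
exists (\matrix_(i < 6) nth 0 s' i).
  apply: (unit_rows gu) => k.
  have h0 := rows_sub s' (k := 0%N) isT; have h1 := rows_sub s' (k := 1%N) isT.
  have h2 := rows_sub s' (k := 2%N) isT; have h3 := rows_sub s' (k := 3%N) isT.
  have h4 := rows_sub s' (k := 4%N) isT; have h5 := rows_sub s' (k := 5%N) isT.
  rewrite /= in h0 h1 h2 h3 h4 h5.
  have [e0 e1 _ _] := fr2_inv (evec K 0 *m g) (evec K 1 *m g) (evec K 2 *m g) (evec K 3 *m g) d.
  have [_ _ e2 e3] := fr2_inv (evec K 0 *m g) (evec K 1 *m g) (evec K 2 *m g) (evec K 3 *m g) d.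
  have [_ _ e4 e5] := fr2_inv (evec K 0 *m g) (evec K 1 *m g) (evec K 4 *m g) (evec K 5 *m g) d.
  case: k => [|[|[|[|[|[|k]]]]]] // _.
  - by rewrite {1}e0; subr.
  - by rewrite {1}e1; subr.
  - by rewrite {1}e2; subr.
  - by rewrite {1}e3; subr.
  - by rewrite {1}e4; subr.
  - by rewrite {1}e5; subr.
rewrite gactLA gactLB !gactLA !gactLB !rows_mul //=.
by split => //; apply: fr2_id.
Qed.

Lemma fr3_id (r0 r1 r2 r3 r4 r5 : 'rV[K]_6) b0 b1 b3 : b3 != 0 ->
  wedge r0 (r2 + (b0 / b3) *: r1) + wedge (b3^-1 *: r1) (b0 *: r0 + b1 *: r1 + b3 *: r3) = wedge r0 r2 + wedge r1 r3 /\
  wedge r0 r4 + wedge (b3^-1 *: r1) (b3 *: r5) = wedge r0 r4 + wedge r1 r5.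
Proof. by move=> d; split; mgen; field. Qed.

Lemma fr3_inv (r0 r1 r2 r3 r5 : 'rV[K]_6) b0 b1 b3 : b3 != 0 ->
  [/\ r1 = b3 *: (b3^-1 *: r1), r2 = (r2 + (b0 / b3) *: r1) - b0 *: (b3^-1 *: r1),
      r3 = b3^-1 *: ((b0 *: r0 + b1 *: r1 + b3 *: r3) - b0 *: r0 - (b1 * b3) *: (b3^-1 *: r1)) &
      r5 = b3^-1 *: (b3 *: r5)].
Proof. by move=> d; split; vgen; field. Qed.

Lemma frame3 (g : 'M[K]_6) (b0 b1 b3 : K) : g \in unitmx -> b3 != 0 ->
  exists2 g' : 'M[K]_6, g' \in unitmx &
   [/\ evec K 0 *m g' = evec K 0 *m g,
       evec K 3 *m g' = b0 *: (evec K 0 *m g) + b1 *: (evec K 1 *m g) + b3 *: (evec K 3 *m g),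
       gact g' LA = gact g LA & gact g' LB = gact g LB].
Proof.
move=> gu d.
set s' := [:: evec K 0 *m g; b3^-1 *: (evec K 1 *m g); evec K 2 *m g + (b0 / b3) *: (evec K 1 *m g);
   b0 *: (evec K 0 *m g) + b1 *: (evec K 1 *m g) + b3 *: (evec K 3 *m g); evec K 4 *m g; b3 *: (evec K 5 *m g)].
exists (\matrix_(i < 6) nth 0 s' i).
  apply: (unit_rows gu) => k.
  have h0 := rows_sub s' (k := 0%N) isT; have h1 := rows_sub s' (k := 1%N) isT.
  have h2 := rows_sub s' (k := 2%N) isT; have h3 := rows_sub s' (k := 3%N) isT.
  have h4 := rows_sub s' (k := 4%N) isT; have h5 := rows_sub s' (k := 5%N) isT.
  rewrite /= in h0 h1 h2 h3 h4 h5.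
  have [e1 e2 e3 e5] := fr3_inv (evec K 0 *m g) (evec K 1 *m g) (evec K 2 *m g) (evec K 3 *m g) (evec K 5 *m g) b0 b1 d.
  case: k => [|[|[|[|[|[|k]]]]]] // _.
  - by rewrite {1}e1; subr.
  - by rewrite {1}e2; subr.
  - by rewrite {1}e3; subr.
  - by rewrite {1}e5; subr.
rewrite gactLA gactLB !gactLA !gactLB !rows_mul //=.
have [i1 i2] := fr3_id (evec K 0 *m g) (evec K 1 *m g) (evec K 2 *m g) (evec K 3 *m g) (evec K 4 *m g) (evec K 5 *m g) b0 b1 d.
by split.
Qed.


Lemma col_subl m1 m2 (A : 'M[K]_(m1,6)) (B : 'M[K]_(m2,6)) : (A <= col_mx A B)%MS.
Proof. by rewrite -addsmxE addsmxSl. Qed.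
Lemma col_subr m1 m2 (A : 'M[K]_(m1,6)) (B : 'M[K]_(m2,6)) : (B <= col_mx A B)%MS.
Proof. by rewrite -addsmxE addsmxSr. Qed.

Lemma gact_subM (h X : 'M[K]_6) : (gact h X <= X *m h)%MS.
Proof. by rewrite /gact -mulmxA submxMl. Qed.

Lemma gact_subM' (h X : 'M[K]_6) : h \in unitmx -> (X *m h <= gact h X)%MS.
Proof.
move=> hu; have -> : X *m h = invmx h^T *m gact h X.
  by rewrite /gact !mulmxA mulVmx ?unitmx_tr // mul1mx.
exact: submxMl.
Qed.

Lemma rank_col_gact (h X Y : 'M[K]_6) : h \in unitmx ->
  \rank (col_mx (gact h X) (gact h Y)) = \rank (col_mx X Y).
Proof.
move=> hu.
have e : \rank (col_mx X Y *m h) = \rank (col_mx X Y).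
  by rewrite mxrankMfree // /row_free mxrank_unit.
apply/eqP; rewrite eqn_leq; apply/andP; split; rewrite -e mxrankS // mul_col_mx col_mx_sub.
  rewrite (submx_trans (gact_subM h X) (col_subl _ _)) /=.
  exact: (submx_trans (gact_subM h Y) (col_subr _ _)).
rewrite (submx_trans (gact_subM' X hu) (col_subl _ _)) /=.
exact: (submx_trans (gact_subM' Y hu) (col_subr _ _)).
Qed.

Lemma rank6' m (M : 'M[K]_(m,6)) : (forall k, (k < 6)%N -> (evec K k <= M)%MS) -> \rank M = 6%N.
Proof.
move=> H; apply/eqP; rewrite eqn_leq rank_leq_col /= -{1}(mxrank1 K 6) mxrankS //.
apply/row_subP => i; rewrite rowE mulmx1.
by have := H i (ltn_ord i); rewrite /evec inord_val.
Qed.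

Lemma gen_full (s t u w : K) : s * w - t * u != 0 ->
  \rank (col_mx (s *: LA + t *: LB) (u *: LA + w *: LB)) = 6%N.
Proof.
move=> d; apply: rank6'.
set X := s *: LA + t *: LB; set Y := u *: LA + w *: LB.
have hX : forall k, (evec K k *m X <= col_mx X Y)%MS by move=> k; exact: submx_trans (submxMl _ _) (col_subl _ _).
have hY : forall k, (evec K k *m Y <= col_mx X Y)%MS by move=> k; exact: submx_trans (submxMl _ _) (col_subr _ _).
have h0 := hX 0%N; have h1 := hX 1%N; have h2 := hX 2%N; have h3 := hX 3%N; have h4 := hX 4%N; have h5 := hX 5%N.
have g0 := hY 0%N; have g1 := hY 1%N; have g2 := hY 2%N; have g3 := hY 3%N; have g4 := hY 4%N; have g5 := hY 5%N.
case=> [|[|[|[|[|[|k]]]]]] // _.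
- have -> : evec K 0 = (- (s * w - t * u)^-1) *: (w *: (evec K 2 *m X) - t *: (evec K 2 *m Y)).
    by rewrite /X /Y; veq; field.
  by subr.
- have -> : evec K 1 = (- (s * w - t * u)^-1) *: (w *: (evec K 3 *m X) - t *: (evec K 3 *m Y)).
    by rewrite /X /Y; veq; field.
  by subr.
- have -> : evec K 2 = (s * w - t * u)^-1 *: (w *: (evec K 0 *m X) - t *: (evec K 0 *m Y)).
    by rewrite /X /Y; veq; field.
  by subr.
- have -> : evec K 3 = (s * w - t * u)^-1 *: (w *: (evec K 1 *m X) - t *: (evec K 1 *m Y)).
    by rewrite /X /Y; veq; field.
  by subr.
- have -> : evec K 4 = (s * w - t * u)^-1 *: ((- u) *: (evec K 0 *m X) + s *: (evec K 0 *m Y)).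
    by rewrite /X /Y; veq; field.
  by subr.
- have -> : evec K 5 = (s * w - t * u)^-1 *: ((- u) *: (evec K 1 *m X) + s *: (evec K 1 *m Y)).
    by rewrite /X /Y; veq; field.
  by subr.
Qed.


Lemma evmulE' n k (M : 'M[K]_(6,n)) j : (evec K k *m M) 0 j = M (inord k) j.
Proof. by rewrite /evec -rowE mxE. Qed.

Lemma invT (g : 'M[K]_6) : g \in unitmx -> (invmx g)^T *m g^T = 1%:M.
Proof. by move=> gu; rewrite -trmx_mul mulmxV // trmx1. Qed.

Lemma pivot_coords (g : 'M[K]_6) p q W : g \in unitmx -> W = (<[p]> + <[q]>)%VS ->
  perpWV W (gact g LA) -> perpWV W (gact g LB) ->
  \rank (gact g LA) = 4%N -> \rank (gact g LB) = 4%N ->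
  forall x, x \in W -> x = (x *m invmx g) 0 (inord 0) *: (evec K 0 *m g) + (x *m invmx g) 0 (inord 1) *: (evec K 1 *m g).
Proof.
move=> gu hW hA hB rA rB x.
have [pA qA] := pivot_sub hW hA rA.
have [pB qB] := pivot_sub hW hB rB.
have [p4 p5] := LA_col (gact_sub gu pA).
have [q4 q5] := LA_col (gact_sub gu qA).
have [p2 p3] := LB_col (gact_sub gu pB).
have [q2 q3] := LB_col (gact_sub gu qB).
rewrite hW => /mem2P [a [b ex]].
have ex' : x *m invmx g = a *: (p *m invmx g) + b *: (q *m invmx g) by rewrite ex mulmxDl -!scalemxAl.
rewrite -{1}(mulmxKV gu x) rowdec_mul ex'.
move: p2 p3 p4 p5 q2 q3 q4 q5; move: (p *m invmx g) (q *m invmx g) => p' q' p2 p3 p4 p5 q2 q3 q4 q5.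
rewrite !mxE p2 p3 p4 p5 q2 q3 q4 q5.
by rewrite !(mulr0, addr0, scale0r).
Qed.

Lemma ytrick (g : 'M[K]_6) q : g \in unitmx ->
  perpWV (<[evec K 0 *m g]> + <[q]>)%VS (gact g LA) -> (q *m invmx g) 0 (inord 2) = 0.
Proof.
move=> gu hA.
set kp := q *m invmx g.
have qk : q = kp *m g by rewrite /kp mulmxKV.
clearbody kp.
set k1 := kp 0 (inord 1); set k2 := kp 0 (inord 2); set k3 := kp 0 (inord 3).
set y' := k2 *: evec K 1 - k1 *: evec K 2.
have key : forall v : 'rV[K]_6, (y' *m (invmx g)^T) *m (v *m g)^T = y' *m v^T.
  by move=> v; rewrite trmx_mul !mulmxA -(mulmxA y') invT // mulmx1.
have hy : forall w, w \in (<[evec K 0 *m g]> + <[q]>)%VS -> (y' *m (invmx g)^T) *m w^T = 0.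
  move=> w /mem2P [a [b ->]].
  have -> : a *: (evec K 0 *m g) + b *: q = (a *: evec K 0 + b *: kp) *m g.
    by rewrite qk mulmxDl -!scalemxAl.
  rewrite key; apply/matrixP => i i'; rewrite !ord1 /y' mulmxBl -!scalemxAl !(evmulE', evecE, mxE) ?inordK //=.
  by rewrite /k1 /k2; ring.
have := hA _ hy.
have -> : (y' *m (invmx g)^T) *m gact g LA = (y' *m LA) *m g.
  by rewrite /gact !mulmxA -(mulmxA y') invT // mulmx1.
have -> : y' *m LA = k2 *: evec K 3 + k1 *: evec K 0.
  rewrite /y' mulmxBl -!scalemxAl; veq; ring.
move=> /mem2P [a [b eq]].
have eq2 : k2 *: evec K 3 + k1 *: evec K 0 = a *: evec K 0 + b *: kp.
  apply: (can_inj (mulmxK gu)); rewrite eq mulmxDl -!scalemxAl -qk //.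
have e2 := congr1 (fun v : 'rV[K]_6 => v 0 (inord 2)) eq2.
have e3 := congr1 (fun v : 'rV[K]_6 => v 0 (inord 3)) eq2.
move: e2 e3; rewrite /= !(evecE, mxE) ?inordK //= -/k2 -/k3.
rewrite !(mulr0, mulr1, addr0, add0r) => e2 e3.
have : k2 * k2 = 0 by rewrite {1}e3 mulrAC -e2 mul0r.
by move/eqP; rewrite mulf_eq0 orbb => /eqP.
Qed.


Lemma Z_pattern (g Y : 'M[K]_6) : g \in unitmx ->
  perpWV (<[evec K 0 *m g]> + <[evec K 3 *m g]>)%VS Y ->
  forall k j, k \in [:: 1; 2; 4; 5]%N -> j \in [:: 1; 2; 4; 5]%N ->
  (gact (invmx g) Y) (inord k) (inord j) = 0.
Proof.
move=> gu hY k j hk hj.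
set Z := gact (invmx g) Y.
have YZ : Y = gact g Z by rewrite /Z gactVK.
clearbody Z.
have k6 : (k < 6)%N by move: hk; rewrite !inE => /or4P [] /eqP ->.
have j6 : (j < 6)%N by move: hj; rewrite !inE => /or4P [] /eqP ->.
set y := evec K k *m (invmx g)^T.
have key : forall v : 'rV[K]_6, y *m (v *m g)^T = evec K k *m v^T.
  by move=> v; rewrite trmx_mul /y !mulmxA -(mulmxA (evec K k)) invT // mulmx1.
have hy : forall w, w \in (<[evec K 0 *m g]> + <[evec K 3 *m g]>)%VS -> y *m w^T = 0.
  move=> w /mem2P [a [b ->]]; rewrite !scalemxAl -mulmxDl key.
  apply/matrixP => i i'; rewrite !ord1 !(evmulE', evecE, mxE) ?inordK //.
  by move: hk; rewrite !inE => /or4P [] /eqP -> /=; ring.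
have := hY _ hy.
have -> : y *m Y = (evec K k *m Z) *m g.
  by rewrite YZ /gact /y !mulmxA -(mulmxA (evec K k)) invT // mulmx1.
move=> /mem2P [a [b eq]].
have eq2 : evec K k *m Z = a *: evec K 0 + b *: evec K 3.
  by apply: (can_inj (mulmxK gu)); rewrite /= eq mulmxDl -!scalemxAl.
have := congr1 (fun v : 'rV[K]_6 => v 0 (inord j)) eq2; rewrite /= evmulE' => ->.
rewrite !(evecE, mxE) ?inordK //.
by move: hj; rewrite !inE => /or4P [] /eqP -> /=; ring.
Qed.

Lemma Z_form (Z : 'M[K]_6) : Z^T = - Z ->
  (forall k j, k \in [:: 1; 2; 4; 5]%N -> j \in [:: 1; 2; 4; 5]%N -> Z (inord k) (inord j) = 0) ->
  Z = Zmx (Z (inord 0) (inord 1)) (Z (inord 0) (inord 2)) (Z (inord 0) (inord 3)) (Z (inord 0) (inord 4))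
          (Z (inord 0) (inord 5)) (Z (inord 3) (inord 1)) (Z (inord 3) (inord 2)) (Z (inord 3) (inord 4))
          (Z (inord 3) (inord 5)).
Proof.
move=> hs hz.
have sk : forall i j, Z j i = - Z i j.
  by move=> i j; have := congr1 (fun M : 'M[K]_6 => M i j) hs; rewrite !mxE.
have dg : forall i, Z i i = 0.
  move=> i; have := sk i i => /eqP; rewrite -subr_eq0 opprK -mulr2n mulrn_eq0 /=.
  by move/eqP.
apply/matrixP => a b; have -> : Z a b = Z (inord a) (inord b) by rewrite !inord_val.
rewrite /Zmx mxE.
sp6 a; sp6 b; first [ done | apply: dg | apply: sk | (apply: hz; done) ].
Qed.

Lemma gact_skew (h X : 'M[K]_6) : X^T = - X -> (gact h X)^T = - gact h X.
Proof. by move=> hX; rewrite /gact !trmx_mul trmxK hX mulNmx mulmxN !mulmxA. Qed.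

Lemma dim_line2 (a b : 'rV[K]_6) : (\dim (<[a]> + <[b]>) <= 2)%N.
Proof.
apply: leq_trans (dimv_add_leqif _ _).1 _.
by rewrite !dim_vline; case: (a != 0); case: (b != 0).
Qed.

Lemma dim2_span (W : {vspace 'rV[K]_6}) : \dim W = 2%N -> exists a b, W = (<[a]> + <[b]>)%VS.
Proof.
move=> hd.
have e : <<(vbasis W : seq _)>>%VS = W := span_basis (vbasisP W).
have sz : size (vbasis W : seq _) = 2%N by rewrite size_tuple hd.
move: e sz; move: (vbasis W : seq _) => s.
case: s => [|a [|b [|c s]]] // e _.
by exists a, b; rewrite -e !span_cons span_nil addv0.
Qed.

Lemma adjust_basis (W : {vspace 'rV[K]_6}) (p : 'rV[K]_6) : \dim W = 2%N -> p \in W -> p != 0 ->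
  exists q, W = (<[p]> + <[q]>)%VS.
Proof.
move=> hd pW pn0.
have [a [b hW]] := dim2_span hd.
have pW' := pW; rewrite hW in pW'; case/mem2P: pW' => al [be ep].
have aW : a \in W by rewrite hW; apply/mem2P; exists 1, 0; rewrite scale1r scale0r addr0.
have bW : b \in W by rewrite hW; apply/mem2P; exists 0, 1; rewrite scale1r scale0r add0r.
have [al0|aln0] := eqVneq al 0.
  have ben0 : be != 0 by apply: contraNneq pn0 => be0; rewrite ep al0 be0 !scale0r addr0.
  exists a; apply/eqP; rewrite eqEdim hd dim_line2 andbT hW subv_add -!memvE.
  apply/andP; split; apply/mem2P.
    by exists 0, 1; rewrite scale1r scale0r add0r.
  by exists be^-1, 0; rewrite ep al0; vgen; field.
exists b; apply/eqP; rewrite eqEdim hd dim_line2 andbT hW subv_add -!memvE.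
apply/andP; split; apply/mem2P.
  by exists al^-1, (- be / al); rewrite ep; vgen; field.
by exists 0, 1; rewrite scale1r scale0r add0r.
Qed.


Lemma memM2P (A B X : 'M[K]_6) :
  reflect (exists a b, X = a *: A + b *: B) (X \in <[A]> + <[B]>)%VS.
Proof.
apply: (iffP memv_addP).
  by move=> [u /vlineP [a ->] [v /vlineP [b ->] ->]]; exists a, b.
move=> [a [b ->]]; exists (a *: A); first by rewrite memvZ // memv_line.
by exists (b *: B); rewrite // memvZ // memv_line.
Qed.

Definition P1 := ew K 0 3 + ew K 1 2.
Definition P2 := ew K 0 4 + ew K 2 3.
Definition P3 := ew K 0 5 + ew K 1 3.

Lemma pi_pE : pi_p K = (<[P1]> + <[P2]> + <[P3]>)%VS.
Proof. by []. Qed.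

Lemma dim_pi_p : \dim (pi_p K) = 3%N.
Proof.
have -> : pi_p K = <<[:: P1; P2; P3]>>%VS by rewrite pi_pE !span_cons span_nil addv0 addvA.
have : free [:: P1; P2; P3].
  rewrite free_cons free_cons seq1_free span_seq1 span_cons span_seq1.
  apply/and3P; split.
  - apply/memM2P => -[a [b]] /(congr1 (fun M : 'M[K]_6 => M (inord 0) (inord 3))).
    rewrite /P1 /P2 /P3 /ew !(wedgeE, evecE, mxE) ?inordK //=.
    by move/eqP; rewrite !(mulr0, mul0r, mulr1, subr0, addr0, add0r) oner_eq0.
  - apply/negP => /vlineP [a] /(congr1 (fun M : 'M[K]_6 => M (inord 0) (inord 4))).
    rewrite /P2 /P3 /ew !(wedgeE, evecE, mxE) ?inordK //=.
    by move/eqP; rewrite !(mulr0, mul0r, mulr1, subr0, addr0, add0r) oner_eq0.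
  - apply/eqP => /(congr1 (fun M : 'M[K]_6 => M (inord 0) (inord 5))).
    rewrite /P3 /ew !(wedgeE, evecE, mxE) ?inordK //=.
    by move/eqP; rewrite !(mulr0, mul0r, mulr1, subr0, addr0, add0r) oner_eq0.
by move/eqP.
Qed.

Lemma gact_inj (g : 'M[K]_6) : g \in unitmx -> injective (gact g).
Proof. by move=> gu X Y e; rewrite -(gactK X gu) -(gactK Y gu) e. Qed.

Lemma LB_neq0 : LB != 0.
Proof.
apply/eqP => /(congr1 (fun M : 'M[K]_6 => M (inord 0) (inord 4))).
rewrite /LB /ew !(wedgeE, evecE, mxE) ?inordK //=.
by move/eqP; rewrite !(mulr0, mul0r, mulr1, subr0, addr0, add0r) oner_eq0.
Qed.

Lemma LA_neq0 : LA != 0.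
Proof.
apply/eqP => /(congr1 (fun M : 'M[K]_6 => M (inord 0) (inord 2))).
rewrite /LA /ew !(wedgeE, evecE, mxE) ?inordK //=.
by move/eqP; rewrite !(mulr0, mul0r, mulr1, subr0, addr0, add0r) oner_eq0.
Qed.

Lemma final_step (pi : {vspace 'M[K]_6}) (G : 'M[K]_6) : \dim pi = 3%N -> G \in unitmx ->
  gact G P1 \in pi -> gact G P2 \in pi -> gact G P3 \in pi -> PGL_equiv (pi_p K) pi.
Proof.
move=> dpi Gu h1 h2 h3; exists G => //.
have sub : (linfun (gact G) @: pi_p K <= pi)%VS.
  by rewrite pi_pE !limgD !limg_line !lfun_gact !subv_add -!memvE h1 h2 h3.
have ker : lker (linfun (gact G)) == 0%VS.
  by apply/lker0P => X Y; rewrite !lfun_gact; exact: gact_inj.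
have dim : \dim (linfun (gact G) @: pi_p K) = 3%N.
  by rewrite limg_dim_eq ?dim_pi_p // (eqP ker) capv0.
by apply/eqP; rewrite eqEdim sub dim dpi.
Qed.


Lemma gactZ (g X : 'M[K]_6) a : gact g (a *: X) = a *: gact g X.
Proof. by rewrite /gact -scalemxAr -scalemxAl. Qed.

Lemma memL0 (Y : 'M[K]_6) : Y \in L0 K -> exists s t, Y = s *: LA + t *: LB.
Proof. by move/memM2P. Qed.

Lemma L0mem s t : s *: LA + t *: LB \in L0 K.
Proof. by apply/memM2P; exists s, t. Qed.

Lemma gen_elem (l : {vspace 'M[K]_6}) g X : g \in unitmx -> (linfun (gact g) @: L0 K)%VS = l ->
  X \in l -> X != 0 -> exists2 st : K * K, (st.1 != 0) || (st.2 != 0) & X = gact g (st.1 *: LA + st.2 *: LB).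
Proof.
move=> gu img Xl Xn0; move: Xl Xn0; rewrite -img => /memv_imgP [Y /memL0 [s [t ->]] ->] Xn0.
exists (s, t); last by rewrite lfun_gact.
apply: contraNT Xn0; rewrite /= negb_or !negbK => /andP [/eqP -> /eqP ->].
by rewrite lfun_gact !scale0r addr0 /gact mulmx0 mul0mx.
Qed.

Lemma gen_in (l : {vspace 'M[K]_6}) g s t : (linfun (gact g) @: L0 K)%VS = l ->
  gact g (s *: LA + t *: LB) \in l.
Proof. by move=> <-; rewrite -lfun_gact memv_img // L0mem. Qed.

Lemma main_red (pi : {vspace 'M[K]_6}) l1 l2 W1 W2 p :
  \dim pi = 3%N -> skew_space pi -> all_rank 4 pi ->
  (l1 <= pi)%VS -> general_line l1 -> is_pivot l1 W1 ->
  (l2 <= pi)%VS -> general_line l2 -> is_pivot l2 W2 -> W1 != W2 ->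
  p != 0 -> p \in W1 -> p \in W2 -> PGL_equiv (pi_p K) pi.
Proof.
move=> dpi skpi rkpi l1pi [dl1 _ _ [g1 g1u img1]] [dW1 l1W1] l2pi [dl2 _ _ [g2 g2u img2]] [dW2 l2W2] W12 pn0 pW1 pW2.
have inpi1 : forall M, M \in l1 -> M \in pi by move=> M; apply: (subvP l1pi).
have inpi2 : forall M, M \in l2 -> M \in pi by move=> M; apply: (subvP l2pi).
have perp1 : forall M, M \in l1 -> perpWV W1 M by move=> M hM; apply: wedgeWV_perp; apply: (subvP l1W1).
have perp2 : forall M, M \in l2 -> perpWV W2 M by move=> M hM; apply: wedgeWV_perp; apply: (subvP l2W2).
have capn0 : (l1 :&: l2)%VS != 0%VS.
  rewrite -dimv_eq0; apply/eqP => d0.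
  have h := dimv_sum_cap l1 l2; rewrite d0 dl1 dl2 addn0 in h.
  have : (l1 + l2 <= pi)%VS by rewrite subv_add l1pi l2pi.
  by move/dimvS; rewrite h dpi.
set X0 := vpick (l1 :&: l2)%VS.
have X0n0 : X0 != 0 by rewrite vpick0.
have [X0l1 X0l2] : X0 \in l1 /\ X0 \in l2 by apply/andP; rewrite -memv_cap memv_pick.
have rk : forall M, M \in pi -> M != 0 -> \rank M = 4%N := rkpi.
have [[s t] /= st eX01] := gen_elem g1u img1 X0l1 X0n0.
have [g1a g1au [eA1 [u [w eB1]]]] := frame1 g1u st.
rewrite -eX01 in eA1.
set B1 := gact g1a LB.
have B1l1 : B1 \in l1 by rewrite /B1 eB1 (gen_in _ _ img1).
have B1n0 : B1 != 0.
  rewrite /B1; apply/eqP => h; move/eqP: LB_neq0; apply; apply: (gact_inj g1au).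
  by rewrite h /gact mulmx0 mul0mx.
have rX0 : \rank X0 = 4%N := rk _ (inpi1 _ X0l1) X0n0.
have rB1 : \rank B1 = 4%N := rk _ (inpi1 _ B1l1) B1n0.
have [q1 hW1] := adjust_basis dW1 pW1 pn0.
have pA1 : perpWV W1 (gact g1a LA) by rewrite eA1; apply: perp1.
have rA1 : \rank (gact g1a LA) = 4%N by rewrite eA1.
have ep := pivot_coords g1au hW1 pA1 (perp1 _ B1l1) rA1 rB1 pW1.
have a01 : ((p *m invmx g1a) 0 (inord 0) != 0) || ((p *m invmx g1a) 0 (inord 1) != 0).
  apply: contraNT pn0; rewrite negb_or !negbK => /andP [/eqP h0 /eqP h1].
  by rewrite ep h0 h1 !scale0r addr0.
have [g1b g1bu [e0b eAb eBb]] := frame2 g1au a01.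
rewrite -ep in e0b; rewrite eA1 in eAb; rewrite -/B1 in eBb.
have [q hW2] := adjust_basis dW2 pW2 pn0.
have [_ qX0] := pivot_sub hW2 (perp2 _ X0l2) rX0.
rewrite -eAb in qX0; have [k4 k5] := LA_col (gact_sub g1bu qX0).
have k2 : (q *m invmx g1b) 0 (inord 2) = 0.
  apply: ytrick g1bu _; rewrite e0b -hW2 eAb; exact: perp2 _ X0l2.
have eq : q = (q *m invmx g1b) 0 (inord 0) *: (evec K 0 *m g1b) + (q *m invmx g1b) 0 (inord 1) *: (evec K 1 *m g1b)
    + (q *m invmx g1b) 0 (inord 3) *: (evec K 3 *m g1b).
  by rewrite -{1}(mulmxKV g1bu q) (rowdec_mul (q *m invmx g1b) g1b) k2 k4 k5 !scale0r !addr0.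
have k3 : (q *m invmx g1b) 0 (inord 3) != 0.
  apply/negP => /eqP k30.
  have pA1b : perpWV W1 (gact g1b LA) by rewrite eAb; apply: perp1.
  have pB1b : perpWV W1 (gact g1b LB) by rewrite eBb; apply: perp1.
  have rA1b : \rank (gact g1b LA) = 4%N by rewrite eAb.
  have rB1b : \rank (gact g1b LB) = 4%N by rewrite eBb.
  have pc2 := pivot_coords g1bu hW1 pA1b pB1b rA1b rB1b.
  have W1e : W1 = (<[evec K 0 *m g1b]> + <[evec K 1 *m g1b]>)%VS.
    apply/eqP; rewrite eqEdim dW1 dim_line2 andbT; apply/subvP => x xW1.
    by rewrite (pc2 x xW1); apply/mem2P; eexists; eexists; reflexivity.
  have qW1 : q \in W1.
    rewrite W1e; apply/mem2P; eexists; eexists.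
    by rewrite {1}eq k30 scale0r addr0.
  apply: (negP W12); rewrite eq_sym eqEdim dW1 dW2 leqnn andbT hW2 subv_add -!memvE pW1 qW1.
  by [].
have [g g_u [e0g e3g eAg eBg]] := @frame3 g1b ((q *m invmx g1b) 0 (inord 0)) ((q *m invmx g1b) 0 (inord 1)) _ g1bu k3.
rewrite -eq in e3g; rewrite e0b in e0g; rewrite eAb in eAg; rewrite eBb in eBg.
have hW2' : W2 = (<[evec K 0 *m g]> + <[evec K 3 *m g]>)%VS by rewrite e0g e3g.
have [[s' t'] /= st' eX02] := gen_elem g2u img2 X0l2 X0n0.
pose u' : K := if s' != 0 then 0 else 1.
pose w' : K := if s' != 0 then 1 else 0.
have d' : s' * w' - t' * u' != 0.
  by rewrite /u' /w'; case: (s' =P 0) st' => [->|/eqP sn0] /=; rewrite ?mulr0 ?mulr1 ?subr0 ?sub0r ?oppr_eq0.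
set Y2 := gact g2 (u' *: LA + w' *: LB).
have Y2l2 : Y2 \in l2 := gen_in _ _ img2.
have rcol : \rank (col_mx X0 Y2) = 6%N by rewrite eX02 /Y2 rank_col_gact // gen_full.
set Z := gact (invmx g) Y2.
have YZ : gact g Z = Y2 by rewrite /Z gactVK.
have Zsk : Z^T = - Z by apply: gact_skew; apply/eqP; apply: skpi; apply: inpi2.
have Zpat := Z_pattern g_u (eq_ind _ (fun W => perpWV W Y2) (perp2 _ Y2l2) _ hW2').
have ZF := Z_form Zsk Zpat.
have X0pi := inpi1 _ X0l1; have B1pi := inpi1 _ B1l1; have Y2pi := inpi2 _ Y2l2.
have hr : forall x y z : K, x *: LA + y *: LB + z *: Z != 0 -> \rank (x *: LA + y *: LB + z *: Z)%R = 4%N.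
  move=> x y z nz.
  have e : gact g (x *: LA + y *: LB + z *: Z) = x *: X0 + y *: B1 + z *: Y2.
    by rewrite (gactD g (x *: LA + y *: LB) (z *: Z)) (gactD g (x *: LA) (y *: LB)) !gactZ eAg eBg YZ.
  rewrite -(rank_gact _ g_u) e; apply: rk.
    by rewrite !memvD ?memvZ.
  rewrite -e; apply: contra nz => /eqP h; apply/eqP; apply: (gact_inj g_u).
  by rewrite h /gact mulmx0 mul0mx.
have rcolZ : \rank (col_mx LA Z) = 6%N.
  by rewrite -[LA](gactK LA g_u) eAg rank_col_gact ?unitmx_inv.
move: hr rcolZ YZ; rewrite ZF.
move: (Z (inord 0) (inord 1)) (Z (inord 0) (inord 2)) (Z (inord 0) (inord 3)) (Z (inord 0) (inord 4))
  (Z (inord 0) (inord 5)) (Z (inord 3) (inord 1)) (Z (inord 3) (inord 2)) (Z (inord 3) (inord 4))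
  (Z (inord 3) (inord 5)) => c1 c2 c3 c4 c5 d1 d2 d4 d5 hr rcolZ YZ.
have [d20 d40] := S1 hr.
subst d2 d4.
have d5n0 : d5 != 0.
  by apply/negP => /eqP d50; subst d5; exact: S2 rcolZ.
have Dn0 := S3 d5n0 hr.
have [h hu [e1 e2 e3]] := S4 d5n0 Dn0.
have comb : forall a b c : K, gact g (a *: LA + b *: LB + c *: Zmx c1 c2 c3 c4 c5 d1 0 0 d5) \in pi.
  move=> a b c; rewrite (gactD g (a *: LA + b *: LB)) (gactD g (a *: LA) (b *: LB)) !gactZ eAg eBg YZ.
  by rewrite !memvD ?memvZ.
apply: (final_step dpi (G := h *m g)); first by rewrite unitmx_mul hu g_u.
- by rewrite gact_mul /P1 e1 comb.
- by rewrite gact_mul /P2 e2 comb.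
- by rewrite gact_mul /P3 e3 comb.
Qed.
End All.

Theorem mainTheorem8 (R : realType) (pi : {vspace 'M[R[i]]_6}) :
  \dim pi = 3%N -> skew_space pi -> all_rank 4 pi ->
  (exists l, (l <= pi)%VS /\ general_line l) ->
  (exists2 p : 'rV[R[i]]_6, p != 0 &
     forall l W, (l <= pi)%VS -> general_line l -> is_pivot l W -> p \in W) ->
  (exists l1 l2 W1 W2,
     [/\ (l1 <= pi)%VS, general_line l1 & is_pivot l1 W1] /\
     [/\ (l2 <= pi)%VS, general_line l2 & is_pivot l2 W2] /\ W1 != W2) ->
  PGL_equiv (@pi_p _) pi.
Proof.
move=> dpi skpi rkpi _ [p pn0 Hp] [l1 [l2 [W1 [W2 [[l1pi gl1 pv1] [[l2pi gl2 pv2] W12]]]]]].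
exact: (main_red dpi skpi rkpi l1pi gl1 pv1 l2pi gl2 pv2 W12 pn0 (Hp _ _ l1pi gl1 pv1) (Hp _ _ l2pi gl2 pv2)).
Qed.
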